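(* Let $\Omega=\{\Omega_1,\dots,\Omega_N\}$ be a finite set of points with distance function $d$, let $1\le n<N$, and let $r\in\{1,\dots,n\}$. Define, for $t\in\{1,\dots,n\}$, $f(t)=\max\big(d(\Omega_{n+1},\Omega_t),\ MMJ(\Omega_t,\Omega_r~|~\Omega_{[1,n]})\big)$, and $\mathbb{X}=\{f(t): t\in\{1,\dots,n\}\}$. Then $MMJ(\Omega_{n+1},\Omega_r~|~\Omega_{[1,n+1]})=\min(\mathbb{X})$.
   Context: $\Omega$ is a finite set of points indexed $\Omega_1,\dots,\Omega_N$, and $\Omega_{[1,n]}=\{\Omega_1,\dots,\Omega_n\}$. $d:\Omega\times\Omega\to[0,\infty)$ is a distance function (e.g. Euclidean distance), symmetric with $d(x,x)=0$. For a subset $S\subseteq\Omega$, a path from $i$ to $j$ in $S$ is a finite sequence of points of $S$ (at least two) starting at $i$ and ending at $j$, with no repeated points except that start and end may coincide when $i=j$. A jump of a path is the distance $d(x,y)$ between two consecutive points $x,y$, and $max\_jump$ of a path is its largest jump. The Min-Max-Jump distance with context $S$ is $MMJ(i,j~|~S)=\min\{max\_jump(\epsilon): \epsilon \text{ a path from } i \text{ to } j \text{ in } S\}$ for $i,j\in S$, with $MMJ(i,i~|~S)=0$. *)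

(* Defs.v *)
From HB Require Import structures.
From mathcomp Require Import all_boot all_order all_algebra.
From mathcomp Require Import reals.
Set Implicit Arguments. Unset Strict Implicit. Unset Printing Implicit Defensive.
Import Order.TTheory GRing.Theory Num.Theory.
Local Open Scope ring_scope.

Section MMJ.
Variables (R : realDomainType) (T : finType) (d : T -> T -> R).

Definition is_path (S : {set T}) (i j : T) (p : seq T) : bool :=
  match p with
  | [::] => false
  | x :: q => [&& x == i, last x q == j, q != [::], all (mem S) p &
                 if i == j then uniq q else uniq p]
  end.

Definition max_jump (p : seq T) : R :=
  \big[Num.max/0]_(e <- zip p (behead p)) d e.1 e.2.

(* Paths have no repeated points so have size <= #|T|+1; we enumerate tuples
   of size k < #|T|.+2.  For i != j in S the path [:: i; j] exists with
   max_jump = d i j, so using d i j as the neutral value of the min is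
   harmless (it is attained). *)
Definition MMJ (S : {set T}) (i j : T) : R :=
  if i == j then 0 else
  \big[Num.min/d i j]_(k < #|T|.+2)
     \big[Num.min/d i j]_(t : k.-tuple T | is_path S i j t) max_jump t.

End MMJ.

(* Omega_[1,k] = {Omega_1, ..., Omega_k}; indices are 0-based in Rocq,
   so Omega_(s+1) is Om s. *)
Definition Omega_upto (T : finType) (N : nat) (Om : 'I_N -> T) (k : nat) : {set T} :=
  [set Om t | t : 'I_N & (t < k)%N].

(* Main.v *)
Require Import Defs.
From HB Require Import structures.
From mathcomp Require Import all_boot all_order all_algebra.
From mathcomp Require Import reals.
From mathcomp Require Import zify.
Import Order.TTheory GRing.Theory Num.Theory.
Local Open Scope ring_scope.

Section L.
Variables (R : realDomainType) (T : finType) (d : T -> T -> R).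
Hypothesis d_ge0 : forall x y, 0 <= d x y.

Lemma min_either (x y : R) : Num.min x y = x \/ Num.min x y = y.
Proof. by rewrite minEle; case: ifP; [left|right]. Qed.

Lemma MMJ_attain (S : {set T}) (i j : T) : i != j -> i \in S -> j \in S ->
  exists2 p, is_path S i j p & MMJ d S i j = max_jump d p.
Proof.
move=> ij iS jS; rewrite /MMJ (negbTE ij).
pose K := fun v => v = d i j \/ exists2 p, is_path S i j p & v = max_jump d p.
have Kmin : forall x y, K x -> K y -> K (Num.min x y).
  by move=> x y Kx Ky; case: (min_either x y) => ->.
have : K (\big[Num.min/d i j]_(k < #|T|.+2)
     \big[Num.min/d i j]_(t : k.-tuple T | is_path S i j t) max_jump d t).
  apply: big_ind => //; first by left.
  move=> k _; apply: big_ind => //; first by left.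
  move=> t pt; right; by exists (tval t).
case=> [->|//].
exists [:: i; j]; last first.
  by rewrite /max_jump /= big_cons big_nil /= max_l.
by rewrite /= eqxx /= iS jS /= (negbTE ij) /= eqxx inE ij.
Qed.

Lemma MMJ_le (S : {set T}) (i j : T) (p : seq T) : i != j -> is_path S i j p -> (size p < #|T|.+2)%N ->
  MMJ d S i j <= max_jump d p.
Proof.
move=> ij pp sp; rewrite /MMJ (negbTE ij).
apply: (@bigmin_inf _ _ _ _ (Ordinal sp)) => //.
by apply: (@bigmin_inf _ _ _ _ (in_tuple p)).
Qed.

Lemma MMJ_le_d (S : {set T}) (i j : T) : MMJ d S i j <= d i j.
Proof. rewrite /MMJ; case: ifP => [/eqP->|_]; first by [].
exact: bigmin_le_id. Qed.

Lemma max_jump_cons x y q : max_jump d [:: x, y & q] = Num.max (d x y) (max_jump d (y :: q)).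
Proof. by rewrite /max_jump /= big_cons. Qed.
End L.

Theorem theorem3p3 (R : realType) (T : finType) (d : T -> T -> R)
  (d_ge0 : forall x y, 0 <= d x y) (d_sym : forall x y, d x y = d y x)
  (d_xx : forall x, d x x = 0)
  (N : nat) (Om : 'I_N -> T) (Om_inj : injective Om)
  (n : nat) (hn1 : (1 <= n)%N) (hnN : (n < N)%N)
  (r : 'I_N) (hr : (r < n)%N) :
  let f := fun t : 'I_N =>
    Num.max (d (Om (Ordinal hnN)) (Om t)) (MMJ d (Omega_upto Om n) (Om t) (Om r)) in
  let m := MMJ d (Omega_upto Om n.+1) (Om (Ordinal hnN)) (Om r) in
  (exists2 t : 'I_N, (t < n)%N & m = f t) /\
  (forall t : 'I_N, (t < n)%N -> m <= f t).
Proof.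
move=> f m.
set x := Om (Ordinal hnN).
set S := Omega_upto Om n.
set S' := Omega_upto Om n.+1.
have memS : forall t : 'I_N, (t < n)%N -> Om t \in S.
  by move=> t ht; apply/imsetP; exists t; rewrite ?inE.
have inS : forall z, z \in S -> exists2 t : 'I_N, (t < n)%N & z = Om t.
  by move=> z /imsetP [t]; rewrite inE => ht ->; exists t.
have SS' : forall z, z \in S -> z \in S'.
  move=> z /inS [t ht ->]; apply/imsetP; exists t; rewrite ?inE //; exact: ltnW.
have xS' : x \in S' by apply/imsetP; exists (Ordinal hnN); rewrite ?inE /=.
have xnS : x \notin S.
  apply/negP => /inS [t ht] /Om_inj tE.
  by move: ht; rewrite -tE /= ltnn.
have S'S : forall z, z \in S' -> z != x -> z \in S.
  move=> z /imsetP [t]; rewrite inE => ht -> hx; apply: memS.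
  rewrite ltn_neqAle -ltnS ht andbT; apply: contra hx => /eqP tn.
  by apply/eqP; congr Om; apply: val_inj.
have xt : forall t : 'I_N, (t < n)%N -> x != Om t.
  by move=> t /memS ht; apply: contraNneq xnS => ->.
have xr := xt r hr.
have hB : forall t : 'I_N, (t < n)%N -> m <= f t.
  move=> t ht; rewrite /f /m.
  have [tr|tr] := eqVneq (Om t) (Om r).
    rewrite tr /MMJ eqxx max_l //; exact: MMJ_le_d.
  have [q qp ->] := @MMJ_attain R T d d_ge0 _ _ _ tr (memS t ht) (memS r hr).
  case: q qp => [//|a q1] qp.
  have /and5P [/eqP aE lq qn allq uq] := qp.
  rewrite (negbTE tr) in uq.
  case: q1 qp lq qn allq uq => [//|b q2] qp lq qn allq uq.
  rewrite -aE -max_jump_cons.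
  apply: MMJ_le => //.
    have allS' : all (mem S') [:: x, a, b & q2].
      by apply/allP => z; rewrite inE => /orP [/eqP->//|/(allP allq)/SS'].
    apply/and5P; split => //.
    rewrite (negbTE xr) cons_uniq uq andbT; apply/negP => /(allP allq); exact/negP.
  have := max_card (mem [:: a, b & q2]); move/card_uniqP: uq => ->.
  by rewrite [size (x :: _)]/= ltnS.
have [t ht ftm] : exists2 t : 'I_N, (t < n)%N & f t <= m.
  have [p pp mE] := @MMJ_attain R T d d_ge0 S' x (Om r) xr xS' (SS' _ (memS r hr)).
  case: p pp mE => [//|a q] pp mE.
  have /and5P [/eqP aE lq qn allp up] := pp.
  rewrite (negbTE xr) in up.
  subst a.
  case: q pp mE lq qn allp up => [//|y q'] pp mE lq qn allp up.
  have := up; rewrite cons_uniq => /andP [xnq uq].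
  have yx : y != x.
    by apply: contraNneq xnq => ->; rewrite inE eqxx.
  have yS' : y \in S' by move: allp => /= /and3P [].
  have [t ht yE] := inS y (S'S y yS' yx).
  exists t => //; rewrite /f -/x -yE /m -/x -/S' mE max_jump_cons.
  rewrite ge_max !le_max lexx /=.
  have [yr|yr] := eqVneq y (Om r).
    by rewrite yr /MMJ eqxx d_ge0.
  apply/orP; right; apply: MMJ_le => //.
    apply/and5P; split => //.
    - case: q' {pp mE allp up uq xnq qn} lq => //= /eqP yE'. by rewrite yE' eqxx in yr.
    - apply/allP => z zq; apply: S'S.
        by apply: (allP allp); rewrite inE zq orbT.
      by apply: contraNneq xnq => <-.
    - by rewrite (negbTE yr).
  have := max_card (mem (x :: y :: q')); move/card_uniqP: up => ->.
  rewrite /=; lia.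
split; last exact: hB.
exists t => //; apply/eqP; rewrite eq_le ftm andbT; exact: hB.
Qed.
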